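(* Let $S_n$ be the star tree on $n\geq 3$ vertices. Then $$\det(xI-\mathrm{Max4PC}_{S_n})=x^{\binom{n}{2}-2}\left(x^2-2(n-1)^2x-(n-1)\binom{n-1}{2}\right),$$ so the nonzero eigenvalues of $\mathrm{Max4PC}_{S_n}$ are $$(n-1)^2\pm\sqrt{(n-1)^4+(n-1)\binom{n-1}{2}}.$$
   Context: For a tree $T$ with vertex set $V$, $|V|=n$, let $d_{x,y}$ denote the distance between vertices $x,y$ in $T$. $\mathrm{Max4PC}_T$ is the $\binom{n}{2}\times\binom{n}{2}$ matrix with rows and columns indexed by the $2$-element subsets of $V$, whose entry in row $\{w,x\}$ and column $\{y,z\}$ is $\max\{d_{w,x}+d_{y,z},\ d_{w,y}+d_{x,z},\ d_{w,z}+d_{x,y}\}$. The star $S_n$ is the tree with one vertex adjacent to all other $n-1$ vertices. *)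

(* Defs.v *)
From HB Require Import structures.
From mathcomp Require Import all_boot all_order all_algebra.
Set Implicit Arguments. Unset Strict Implicit. Unset Printing Implicit Defensive.
Import Order.TTheory GRing.Theory Num.Theory.

(* Vertices of the star S_n are 0, 1, ..., n-1 (as 'I_n); vertex 0 is the
   center, adjacent to all others.  Distance in S_n: *)
Definition star_dist (i j : nat) : nat :=
  if i == j then 0 else if (i == 0) || (j == 0) then 1 else 2.

Definition pairs (n : nat) : {set {set 'I_n}} := [set A : {set 'I_n} | #|A| == 2].

Definition fst_el n (A : {set 'I_n}) : nat := nth 0 (map val (enum A)) 0.
Definition snd_el n (A : {set 'I_n}) : nat := nth 0 (map val (enum A)) 1.

Definition max4pc_entry n (A B : {set 'I_n}) : nat :=
  let w := fst_el A in let x := snd_el A in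
  let y := fst_el B in let z := snd_el B in
  maxn (star_dist w x + star_dist y z)
       (maxn (star_dist w y + star_dist x z) (star_dist w z + star_dist x y)).

Definition Max4PC_star (R : nzRingType) (n : nat) : 'M[R]_#|pairs n| :=
  \matrix_(i, j) ((max4pc_entry (enum_val i) (enum_val j))%:R)%R.

(* Main.v *)
Require Import Defs.
From HB Require Import structures.
From mathcomp Require Import all_boot all_order all_algebra ring zify.
Import Order.TTheory GRing.Theory Num.Theory.
Local Open Scope ring_scope.
Lemma enum2 n (A : {set 'I_n}) : #|A| = 2%N ->
  map val (enum A) = [:: fst_el A; snd_el A] /\ fst_el A != snd_el A.
Proof.
move=> hA.
have hu : uniq (map val (enum A)) by rewrite map_inj_uniq ?enum_uniq //; exact: val_inj.
have : size (map val (enum A)) = 2%N by rewrite size_map -cardE.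
rewrite /fst_el /snd_el.
case E: (map val (enum A)) hu => [|a [|b [|]]] //= hu _.
by split => //; move: hu; rewrite inE andbT.
Qed.

Lemma in_pair0 m (A : {set 'I_m.+1}) : #|A| = 2%N ->
  ((fst_el A == 0%N) || (snd_el A == 0%N)) = (ord0 \in A).
Proof.
move=> /enum2 [E _].
rewrite -mem_enum -(mem_map val_inj) E /= !inE.

by rewrite (eq_sym (fst_el A)) (eq_sym (snd_el A)).
Qed.

Lemma sylvester (R : comNzRingType) N k (P : 'M[R]_(N,k)) (Q : 'M[R]_(k,N)) :
  'X^k * char_poly (P *m Q) = 'X^N * char_poly (Q *m P).
Proof.
rewrite /char_poly /char_poly_mx !map_mxM.
set Pp := map_mx polyC P; set Qp := map_mx polyC Q.
pose B := block_mx ('X%:M : 'M_N) Pp Qp 1%:M.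
have h1 : B *m block_mx 1%:M 0 (- Qp) 1%:M = block_mx ('X%:M - Pp *m Qp) Pp 0 1%:M.
  by rewrite mulmx_block !mulmx1 !mulmx0 !mul1mx !add0r mulmxN addrN.
have h2 : block_mx 1%:M 0 (- Qp) ('X%:M) *m B = block_mx 'X%:M Pp 0 ('X%:M - Qp *m Pp).
  rewrite mulmx_block !mulmx1 !mul0mx !mul1mx !addr0 mulNmx.
  by rewrite mul_scalar_mx mul_mx_scalar addNr mulNmx addrC.
have e1 := congr1 determinant h1; have e2 := congr1 determinant h2.
rewrite det_mulmx det_lblock !det1 mulr1 det_ublock det1 ?mulr1 in e1.
rewrite det_mulmx det_lblock det1 mul1r det_ublock !det_scalar in e2. 
by rewrite -e1 e2.
Qed.
Lemma det2 (R : comNzRingType) (A : 'M[R]_2) : \det A = A 0 0 * A 1 1 - A 0 1 * A 1 0.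
Proof.
rewrite (expand_det_row _ 0) !big_ord_recl big_ord0 /cofactor !det_mx11 !mxE /=.
have l1 : lift (0 : 'I_2) (0 : 'I_1) = 1 by exact/val_inj.
have l3 : lift 1 (0 : 'I_1) = 0 by exact/val_inj.
rewrite ?l1 ?l3 /bump /= expr0 expr1.
ring.
Qed.
Lemma entry_nat (w x y z : nat) : w != x -> y != z ->
  (maxn (star_dist w x + star_dist y z)
       (maxn (star_dist w y + star_dist x z) (star_dist w z + star_dist x y)))%N
  = (2 + ~~((w == 0) || (x == 0)) + ~~((y == 0) || (z == 0)))%N.
Proof.
rewrite /star_dist.
repeat match goal with |- context [?a == ?b] => case: (a =P b) => ?; subst end;
  rewrite ?eqxx //.
Qed.

Section Star.
Variable R : comNzRingType.
Variable m : nat.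
Local Notation N := #|pairs m.+1|.
Definition tR (A : {set 'I_m.+1}) : R := (ord0 \notin A)%:R.
Definition Pm : 'M[R]_(N, 2) := \matrix_(i, j) (if j == 0 then 1 else tR (enum_val i)).
Definition Qm : 'M[R]_(2, N) := \matrix_(i, j) (if i == 0 then 2 + tR (enum_val j) else 1).

Lemma pair_card (i : 'I_N) : #|enum_val i| = 2%N.
Proof. by have := enum_valP i; rewrite inE => /eqP. Qed.

Lemma Max_eq : Max4PC_star R m.+1 = Pm *m Qm.
Proof.
apply/matrixP => i j; rewrite !mxE !big_ord_recl big_ord0 !mxE /=.
rewrite /max4pc_entry entry_nat; last first.
- by case: (@enum2 _ _ (pair_card j)).
- by case: (@enum2 _ _ (pair_card i)).
rewrite !in_pair0 ?pair_card // /tR !natrD.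
have l1 : lift (0 : 'I_2) (0 : 'I_1) = 1 by exact/val_inj.
ring.
Qed.

Lemma sum_tR : \sum_(i < N) tR (enum_val i) = ('C(m,2))%:R.
Proof.
rewrite -(big_enum_val tR) /tR -natr_sum; congr (_ %:R).
rewrite (eq_bigr (fun A : {set 'I_m.+1} => if ord0 \notin A then 1 else 0)%N); last first.
  by move=> A _; case: (_ \notin _).
rewrite -big_mkcondr sum1_card.
transitivity #|[set A : {set 'I_m.+1} | A \subset [set~ ord0] & #|A| == 2%N]|; last first.
  by rewrite cards_draws cardsC1 card_ord.
apply: eq_card => A; rewrite !inE andbC; congr (_ && _).
  by rewrite inE.
by rewrite subsetC sub1set !inE.
Qed.

Lemma tR2 A : tR A * tR A = tR A.
Proof. by rewrite /tR; case: (_ \notin _); rewrite ?mulr1 ?mulr0. Qed.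

Lemma QP_entries :
  let b : R := ('C(m,2))%:R in
  [/\ (Qm *m Pm) 0 0 = 2 *+ N + b, (Qm *m Pm) 0 1 = 3 * b,
      (Qm *m Pm) 1 0 = N%:R & (Qm *m Pm) 1 1 = b].
Proof.
move=> b; rewrite !mxE /=; split.
- under eq_bigr do rewrite !mxE /= mulr1.
  by rewrite big_split /= sumr_const card_ord sum_tR.
- under eq_bigr do rewrite !mxE /= mulrDl tR2.
  rewrite big_split /= -mulr_sumr sum_tR. rewrite /b. ring.
- under eq_bigr do rewrite !mxE /= mulr1.
  by rewrite sumr_const card_ord.
- under eq_bigr do rewrite !mxE /= mul1r.
  by rewrite sum_tR.
Qed.

Lemma cpQP :
  let b : R := ('C(m,2))%:R in
  char_poly (Qm *m Pm) =
  ('X - (2 *+ N + b)%:P) * ('X - b%:P) - (3 * b)%:P * (N%:R)%:P.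
Proof.
move=> b; have [e00 e01 e10 e11] := QP_entries.
rewrite !mxE in e00 e01 e10 e11.
rewrite /char_poly det2 /char_poly_mx !mxE e00 e01 e10 e11 /= !mulr1n !mulr0n.
rewrite /b; rewrite !sub0r !mulrNN -polyCM; done.
Qed.
End Star.

Theorem mainTheorem9 (R : rcfType) (n : nat) (hn : (3 <= n)%N) :
  char_poly (Max4PC_star R n) =
    'X^('C(n, 2) - 2) *
    ('X^2 - ((2 * (n - 1) ^ 2)%N)%:R *: 'X - (((n - 1) * 'C(n - 1, 2))%N)%:R%:P)
  /\ (forall a : R, a != 0 ->
        (eigenvalue (Max4PC_star R n) a <->
           (a = ((n - 1) ^ 2)%N%:R + Num.sqrt (((n - 1) ^ 4 + (n - 1) * 'C(n - 1, 2))%N%:R)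
            \/ a = ((n - 1) ^ 2)%N%:R - Num.sqrt (((n - 1) ^ 4 + (n - 1) * 'C(n - 1, 2))%N%:R)))).
Proof.
case: n hn => [|m] // hm.
have hN : #|pairs m.+1| = 'C(m.+1, 2) by rewrite /pairs card_draws card_ord.
have hsub : (m.+1 - 1 = m)%N by rewrite subn1.
rewrite hsub.
have e2 : (2 * 'C(m, 2) = m * (m - 1))%N.
  by rewrite -mul_bin_diag bin1 subn1.
have hN2 : (2 <= 'C(m.+1, 2))%N.
  rewrite binS bin1; move: hm; lia.
have hcp : char_poly (Max4PC_star R m.+1) = 'X^('C(m.+1,2) - 2) *
    ('X^2 - ((2 * m ^ 2)%N)%:R *: 'X - ((m * 'C(m, 2))%N)%:R%:P).
  apply: (@mulfI _ ('X^2)); first by rewrite expf_neq0 // polyX_eq0.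
  rewrite Max_eq sylvester cpQP hN mulrA -exprD subnKC //; congr (_ * _).
  have e : (2 * m ^ 2 = 2 * m + 4 * 'C(m, 2))%N.
    move: e2 hm; nia.
  rewrite e binS bin1 !natrD !natrM -mul_polyC.
  ring.
split; first exact: hcp.
move=> a a0.
set D := ((m ^ 4 + m * 'C(m, 2))%N)%:R : R.
have key : ('X^2 - ((2 * m ^ 2)%N)%:R *: 'X - ((m * 'C(m, 2))%N)%:R%:P).[a]
    = (a - ((m ^ 2)%N)%:R) ^+ 2 - (Num.sqrt D) ^+ 2.
  rewrite sqr_sqrtr ?ler0n // !hornerE /D !(natrD, natrM, natrX). ring.
rewrite eigenvalue_root_char hcp rootM rootE hornerXn expf_eq0 (negbTE a0) andbF orFb.
rewrite rootE key subr_eq0 eqf_sqr !subr_eq.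
split => [/orP [] /eqP -> | [] ->].
- by left; rewrite addrC.
- by right; rewrite addrC.
- by rewrite addrC eqxx.
- by rewrite addrC eqxx orbT.
Qed.
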